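(* (1) Let $C$ be a binary Euclidean LCD $[n,k]$ code with generator matrix $G$, let $\mathbf{y}\in C^{\perp_E}$, and let $C'$ be the binary code with generator matrix $G'=\begin{pmatrix}\mathbf{y}\\ G\end{pmatrix}$. If $wt(\mathbf{y})$ is odd, then $C'$ is a binary Euclidean LCD $[n,k+1]$ code. (2) Let $C$ be a ternary Euclidean LCD $[n,k]$ code with generator matrix $G$, let $\mathbf{y}\in C^{\perp_E}$, and let $C'$ be the ternary code with generator matrix $G'=\begin{pmatrix}\mathbf{y}\\ G\end{pmatrix}$. If $wt(\mathbf{y})\not\equiv 0\pmod 3$, then $C'$ is a ternary Euclidean LCD $[n,k+1]$ code. (3) Let $C$ be a quaternary Hermitian LCD $[n,k]$ code with generator matrix $G$, let $\mathbf{y}\in C^{\perp_H}$, and let $C'$ be the quaternary code with generator matrix $G'=\begin{pmatrix}\mathbf{y}\\ G\end{pmatrix}$. If $wt(\mathbf{y})$ is odd, then $C'$ is a quaternary Hermitian LCD $[n,k+1]$ code.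
   Context: Binary, ternary, quaternary codes are linear codes over $\mathbb{F}_2,\mathbb{F}_3,\mathbb{F}_4$. An $[n,k]$ code is a $k$-dimensional subspace of $\mathbb{F}_q^n$; a generator matrix has rows forming a basis. $wt$ is the Hamming weight. Euclidean inner product $\langle x,y\rangle_E=\sum x_iy_i$ with dual $C^{\perp_E}$; on $\mathbb{F}_4^n$ the Hermitian inner product is $\langle x,y\rangle_H=\sum x_iy_i^2$ with dual $C^{\perp_H}$. A code is (Euclidean/Hermitian) LCD if $C\cap C^{\perp}=\{0\}$. *)

(* Defs.v *)
From HB Require Import structures.
From mathcomp Require Import all_boot all_order all_algebra all_field.
Set Implicit Arguments. Unset Strict Implicit. Unset Printing Implicit Defensive.
Import GRing.Theory.
Local Open Scope ring_scope.

(* Linear codes over a field F: an [n,k] code C is given by a generator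
   matrix G : 'M[F]_(k,n) whose rows form a basis of C (row_free G);
   C is the row space of G. *)
Section Codes.
Variable F : fieldType.

Definition ipE n (x y : 'rV[F]_n) : F := \sum_(i < n) x 0 i * y 0 i.
(* Hermitian inner product <x,y>_H = sum x_i y_i^2 (meaningful over F_4) *)
Definition ipH n (x y : 'rV[F]_n) : F := \sum_(i < n) x 0 i * (y 0 i) ^+ 2.

Definition wt n (x : 'rV[F]_n) : nat := #|[set i : 'I_n | x 0 i != 0]|.

Definition is_gen_matrix k n (G : 'M[F]_(k, n)) : Prop := row_free G.

Definition in_code k n (G : 'M[F]_(k, n)) (x : 'rV[F]_n) : bool := (x <= G)%MS.

Definition in_dualE k n (G : 'M[F]_(k, n)) (y : 'rV[F]_n) : Prop :=
  forall x, in_code G x -> ipE x y = 0.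
Definition in_dualH k n (G : 'M[F]_(k, n)) (y : 'rV[F]_n) : Prop :=
  forall x, in_code G x -> ipH x y = 0.

Definition LCD_E k n (G : 'M[F]_(k, n)) : Prop :=
  forall x, in_code G x -> in_dualE G x -> x = 0.
Definition LCD_H k n (G : 'M[F]_(k, n)) : Prop :=
  forall x, in_code G x -> in_dualH G x -> x = 0.

End Codes.

(* Main.v *)
Require Import Defs.
From HB Require Import structures.
From mathcomp Require Import all_boot all_order all_algebra all_field.
From mathcomp Require Import ring.
Import GRing.Theory.
Local Open Scope ring_scope.

Lemma gen_LCD (F : fieldType) n k (f : 'rV[F]_n -> 'rV[F]_n -> F) (s : F -> F)
 (fD : forall z a u v, f z (a *: u + v) = s a * f z u + f z v)
 (f0 : forall z, f z 0 = 0) (s0 : forall a, s a = 0 -> a = 0)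
 (G : 'M[F]_(k,n)) (y : 'rV[F]_n) :
 row_free G ->
 (forall x, (x <= G)%MS -> (forall z, (z <= G)%MS -> f z x = 0) -> x = 0) ->
 (forall z, (z <= G)%MS -> f z y = 0) -> f y y != 0 ->
 row_free (col_mx y G) /\
 (forall x, (x <= col_mx y G)%MS -> (forall z, (z <= col_mx y G)%MS -> f z x = 0) -> x = 0).
Proof.
move=> rG lcd yd fyy.
have yn0 : y != 0 by apply: contraNneq fyy => ->; rewrite f0.
have yG : ~~ (y <= G)%MS.
  apply/negP => yG; move/eqP: yn0; apply; exact: lcd.
have sG : forall z : 'rV_n, (z <= G)%MS -> (z <= col_mx y G)%MS.
  by move=> z zG; rewrite -addsmxE (submx_trans zG) ?addsmxSr.
have sy : (y <= col_mx y G)%MS by rewrite -addsmxE addsmxSl.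
split.
  rewrite /row_free -addsmxE.
  have := mxrank_sum_cap y G; rewrite rank_rV yn0 (eqP rG).
  have -> : \rank (y :&: G) = 0%N.
    have := mxrank_leqif_eq (capmxSl y G); rewrite rank_rV yn0.
    case=> le1 eqc.
    case E: (\rank (y :&: G)) => [//|m].
    have : (\rank (y :&: G) == 1%N) by rewrite E; move: le1; rewrite E; case: m {E}.
    rewrite eqc => /andP[_ +]; rewrite sub_capmx => /andP[_ yG'].
    by rewrite yG' in yG.
  by rewrite addn0 => ->.
move=> x /submxP[u ->] xd.
rewrite -(hsubmxK u) mul_row_col (mx11_scalar (lsubmx u)) mul_scalar_mx.
set a := lsubmx u 0 0; set c := rsubmx u *m G.
have cG : (c <= G)%MS by apply: submxMl.
have c0 : c = 0.
  apply: lcd => // z zG.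
  have := xd z (sG z zG).
  by rewrite -(hsubmxK u) mul_row_col (mx11_scalar (lsubmx u)) mul_scalar_mx -/a -/c fD yd // mulr0 add0r.
have := xd y sy.
rewrite -(hsubmxK u) mul_row_col (mx11_scalar (lsubmx u)) mul_scalar_mx -/a -/c fD c0 f0 addr0.
move/eqP; rewrite mulf_eq0 (negbTE fyy) orbF => /eqP /s0 ->.
by rewrite scale0r addr0.
Qed.

Lemma wt_sum (F : finFieldType) n (y : 'rV[F]_n) :
  \sum_(i < n) (y 0 i) ^+ (#|F|.-1) = (wt y)%:R.
Proof.
rewrite /wt -sum1_card natr_sum [RHS]big_mkcond; apply: eq_bigr => i _.
rewrite inE; case: eqP => [->|/eqP ne].
  by rewrite expr0n; case: #|F| (finRing_gt1 F) => [|[|m]].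
apply: (mulIf ne); rewrite -exprSr prednK ?expf_card ?mul1r //.
by apply: leq_trans (finRing_gt1 F).
Qed.

Theorem theorem3p10 :
  (* (1) binary *)
  (forall (n k : nat) (G : 'M['F_2]_(k, n)) (y : 'rV['F_2]_n),
     is_gen_matrix G -> LCD_E G -> in_dualE G y ->
     odd (wt y) ->
     is_gen_matrix (col_mx y G) /\ LCD_E (col_mx y G)) /\
  (* (2) ternary *)
  (forall (n k : nat) (G : 'M['F_3]_(k, n)) (y : 'rV['F_3]_n),
     is_gen_matrix G -> LCD_E G -> in_dualE G y ->
     (wt y %% 3 != 0)%N ->
     is_gen_matrix (col_mx y G) /\ LCD_E (col_mx y G)) /\
  (* (3) quaternary, F any field with 4 elements *)
  (forall (F : finFieldType) (n k : nat) (G : 'M[F]_(k, n)) (y : 'rV[F]_n),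
     #|F| = 4%N ->
     is_gen_matrix G -> LCD_H G -> in_dualH G y ->
     odd (wt y) ->
     is_gen_matrix (col_mx y G) /\ LCD_H (col_mx y G)).
Proof.
have ED : forall (F : fieldType) n (z : 'rV[F]_n) a u v,
    ipE z (a *: u + v) = a * ipE z u + ipE z v.
  move=> F n z a u v; rewrite /ipE mulr_sumr -big_split; apply: eq_bigr => i _.
  rewrite !mxE /=; ring.
have E0 : forall (F : fieldType) n (z : 'rV[F]_n), ipE z 0 = 0.
  by move=> F n z; rewrite /ipE big1 // => i _; rewrite mxE mulr0.
split; last split.
- move=> n k G y rG lcd yd wo.
  have [] := @gen_LCD _ _ _ (@ipE _ n) id (ED _ n) (E0 _ n) (fun a h => h) G y rG lcd yd.
    have c2 : #|'F_2| = 2%N by rewrite card_Fp.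
    rewrite /ipE.
    have -> : \sum_(i < n) y 0 i * y 0 i = \sum_(i < n) y 0 i ^+ (#|'F_2|.-1).
      apply: eq_bigr => i _; rewrite c2 expr1 -expr2.
      by have := expf_card (y 0 i); rewrite c2.
    by rewrite wt_sum -(dvdn_pcharf (pchar_Fp (isT : prime 2))) dvdn2 wo.
  by move=> h1 h2; split.
- move=> n k G y rG lcd yd wo.
  have [] := @gen_LCD _ _ _ (@ipE _ n) id (ED _ n) (E0 _ n) (fun a h => h) G y rG lcd yd.
    have c3 : #|'F_3| = 3%N by rewrite card_Fp.
    rewrite /ipE.
    have -> : \sum_(i < n) y 0 i * y 0 i = \sum_(i < n) y 0 i ^+ (#|'F_3|.-1).
      by apply: eq_bigr => i _; rewrite c3 -expr2.
    by rewrite wt_sum -(dvdn_pcharf (pchar_Fp (isT : prime 3))) /dvdn.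
  by move=> h1 h2; split.
- move=> F n k G y c4 rG lcd yd wo.
  have two0 : (2%:R : F) = 0.
    have := expf_card (-1 : F); rewrite c4 -signr_odd /= expr0 => /eqP.
    by rewrite -subr_eq0 opprK => /eqP.
  have ch2 : 2%N \in [pchar F] by rewrite inE /= two0 eqxx.
  have HD : forall (z : 'rV[F]_n) a u v,
      ipH z (a *: u + v) = a ^+ 2 * ipH z u + ipH z v.
    move=> z a u v; rewrite /ipH mulr_sumr -big_split; apply: eq_bigr => i _.
    rewrite !mxE /= sqrrD -mulr_natr two0 mulr0 addr0; ring.
  have H0 : forall (z : 'rV[F]_n), ipH z 0 = 0.
    by move=> z; rewrite /ipH big1 // => i _; rewrite mxE expr0n mulr0.
  have s0 : forall a : F, a ^+ 2 = 0 -> a = 0 by move=> a /eqP; rewrite expf_eq0 => /andP[_ /eqP].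
  have [] := @gen_LCD _ _ _ (@ipH _ n) (fun a => a ^+ 2) HD H0 s0 G y rG lcd yd.
    rewrite /ipH.
    have -> : \sum_(i < n) y 0 i * y 0 i ^+ 2 = \sum_(i < n) y 0 i ^+ (#|F|.-1).
      by apply: eq_bigr => i _; rewrite c4 -exprS.
    by rewrite wt_sum -(dvdn_pcharf ch2) dvdn2 wo.
  by move=> h1 h2; split.
Qed.
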